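(* Let $X$ be a topological vector space over $\mathbb{K}$ ($\mathbb{K}=\mathbb{R}$ or $\mathbb{C}$), let $Y$ be a linear subspace of $X$, and let $\alpha$ be a cardinal with $w(X)\le \mathrm{codim}(Y)=\alpha$. Then $X\setminus Y$ is $\alpha$-dense-lineable in $X$, i.e., there is a dense linear subspace $Z$ of $X$ with $\dim(Z)=\alpha$ and $Z\subset (X\setminus Y)\cup\{0\}$.
   Context: A topological vector space is a vector space with a topology making addition and scalar multiplication continuous. The weight $w(X)$ of a topological space $X$ is the smallest cardinality of a base for its topology. $\mathrm{codim}(Y)$ denotes the dimension of the quotient $X/Y$. *)

(* Defs.v *)
From HB Require Import structures.
From mathcomp Require Import all_boot all_order all_algebra.
From mathcomp Require Import all_classical all_reals all_analysis.
From mathcomp Require Import complex.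
Set Implicit Arguments. Unset Strict Implicit. Unset Printing Implicit Defensive.
Import Order.TTheory GRing.Theory Num.Theory.
Local Open Scope classical_set_scope.
Local Open Scope ring_scope.

Section LinAlg.
Variables (K : numDomainType) (X : lmodType K).

Definition lin_subspace (Y : set X) : Prop :=
  Y 0 /\ forall (a : K) (x y : X), Y x -> Y y -> Y (a *: x + y).

Definition lin_span (S : set X) : set X :=
  [set x | exists (s : seq X) (c : X -> K),
     (forall v, v \in s -> S v) /\ x = \sum_(v <- s) c v *: v].

(* S is linearly independent modulo Y (i.e. its image in X/Y is
   linearly independent and S maps injectively to X/Y) *)
Definition lin_indep_mod (Y S : set X) : Prop :=
  forall (s : seq X) (c : X -> K), uniq s -> (forall v, v \in s -> S v) ->
    Y (\sum_(v <- s) c v *: v) -> forall v, v \in s -> c v = 0.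

Definition lin_indep (S : set X) : Prop := lin_indep_mod [set 0] S.

(* codim(Y) = |A| : X/Y has a basis (the image of C) of cardinality |A| *)
Definition codim_eq (Y : set X) (A : Type) : Prop :=
  exists C : set X, lin_indep_mod Y C /\
    (forall x : X, exists y z, Y y /\ lin_span C z /\ x = y + z) /\
    (C #= [set: A])%card.

Definition dim_eq (Z : set X) (A : Type) : Prop :=
  exists S : set X, lin_indep S /\ lin_span S = Z /\ (S #= [set: A])%card.
End LinAlg.

Definition is_top_base (T : topologicalType) (B : set (set T)) : Prop :=
  (forall U, B U -> open U) /\
  (forall U, open U -> forall x, U x -> exists V, B V /\ V x /\ V `<=` U).

Definition weight_le (T : topologicalType) (A : Type) : Prop :=
  exists B : set (set T), is_top_base B /\ (B #<= [set: A])%card.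

Definition dense_lineable_claim (K : numDomainType) (X : topologicalLmodType K)
    (Y : set X) (A : Type) : Prop :=
  lin_subspace Y -> weight_le X A -> codim_eq Y A ->
  exists Z : set X, lin_subspace Z /\ dense Z /\ dim_eq Z A /\
    Z `<=` (~` Y) `|` [set 0].

(* Main.v *)
Require Import Defs.
From Stdlib Require List.
From HB Require Import structures.
From mathcomp Require Import all_boot all_order all_algebra.
From mathcomp Require Import all_classical all_reals all_analysis.
From mathcomp Require Import complex.
Import Order.TTheory GRing.Theory Num.Theory.
Local Open Scope classical_set_scope.
Local Open Scope ring_scope.

Section Aux.
Variables (K : numFieldType) (X : topologicalLmodType K).

Lemma perturb (p v : X) (U : set X) : open U -> U p ->
  exists t : K, t != 0 /\ U (p + t *: v).
Proof.
move=> oU Up.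
have c0 : (fun t : K^o => (t, v)) @ (nbhs (0 : K^o)) --> (nbhs (0:K^o), nbhs v).
  exact: cvg_pair cvg_id (cvg_cst _).
have c1 : (fun t : K^o => t *: v) @ (nbhs (0 : K^o)) --> (0 : K^o) *: v.
  exact: (@continuous_comp K^o (K^o * X)%type X (fun t : K^o => (t, v))
    (fun z : K^o * X => z.1 *: z.2) _ c0 (scale_continuous _)).
have c2 : (fun t : K^o => (p, t *: v)) @ (nbhs (0 : K^o)) -->
   (nbhs p, nbhs ((0:K^o) *: v)).
  exact: cvg_pair (cvg_cst _) c1.
have cf : (fun t : K^o => p + t *: v) @ (0 : K^o) --> p + (0:K^o) *: v.
  exact: (@continuous_comp K^o (X * X)%type X (fun t : K^o => (p, t *: v))
    (fun z : X * X => z.1 + z.2) _ c2 (add_continuous _)).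
have nU : nbhs p U by apply: open_nbhs_nbhs; split.
move: cf; rewrite scale0r addr0 => /(_ U nU) nU'.
have : \forall t \near (0 : K^o)^', t != 0 /\ U (p + t *: v).
  have h1 : \forall t \near (0 : K^o)^', U (p + t *: v).
    by apply: cvg_within; exact: nU'.
  have h2 := nbhs_dnbhs_neq (0 : K^o).
  near=> t; split; [near: t; exact: h2 | near: t; exact: h1].
move=> /filter_ex [t [t0 Ut]].
by exists t.
Unshelve. all: by end_near.
Qed.

Lemma add_term (s : seq X) (c : X -> K) (w : X) (k : K) : uniq s ->
  exists s' (c' : X -> K), [/\ uniq s', {subset s' <= w :: s} &
    \sum_(v <- s') c' v *: v = \sum_(v <- s) c v *: v + k *: w].
Proof.
move=> us; case: (boolP (w \in s)) => ws.
- exists s, (fun v => if v == w then c v + k else c v); split => //.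
    by move=> v vs; rewrite inE vs orbT.
  rewrite (big_rem w ws) [in RHS](big_rem w ws) /= eqxx.
  rewrite (@eq_big_seq _ _ _ _ _ _ (fun v => c v *: v)); last first.
    by move=> v; rewrite mem_rem_uniq // inE => /andP[/negPf -> _].
  by rewrite scalerDl addrAC.
- exists (w :: s), (fun v => if v == w then k else c v); split.
  + by rewrite /= ws us.
  + by [].
  rewrite big_cons eqxx addrC; congr (_ + _); apply: eq_big_seq => v vs.
  have -> : (v == w) = false by apply/eqP => vw; move: ws; rewrite -vw vs.
  by [].
Qed.

Lemma uniq_reduce (s : seq X) (c : X -> K) :
  exists s' (c' : X -> K), [/\ uniq s', {subset s' <= s} &
    \sum_(v <- s') c' v *: v = \sum_(v <- s) c v *: v].
Proof.
elim: s => [|w s [s0 [c0 [us0 sub0 e0]]]].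
  by exists [::], c; split.
have [s' [c' [us' sub' e']]] := add_term s0 c0 w (c w) us0.
exists s', c'; split => //.
  move=> v /sub'; rewrite !inE => /orP[->//|/sub0 ->]; by rewrite orbT.
by rewrite e' e0 big_cons addrC.
Qed.

Lemma pairs_reduce (l : seq (K * X)) :
  exists s (c : X -> K), [/\ uniq s, {subset s <= map snd l} &
    \sum_(v <- s) c v *: v = \sum_(p <- l) p.1 *: p.2].
Proof.
elim: l => [|[k w] l [s0 [c0 [us0 sub0 e0]]]].
  by exists [::], (fun _ => 0); split => //; rewrite !big_nil.
have [s' [c' [us' sub' e']]] := add_term s0 c0 w k us0.
exists s', c'; split => //.
  move=> v /sub'; rewrite !inE => /orP[->//|/sub0 ->]; by rewrite orbT.
by rewrite e' e0 big_cons addrC.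
Qed.

Lemma span_pairs (S : set X) x : lin_span S x <->
  exists l : seq (K * X), (forall p, p \in l -> S p.2) /\
     x = \sum_(p <- l) p.1 *: p.2.
Proof.
split.
  move=> [s [c [sS ->]]]; exists [seq (c v, v) | v <- s]; split.
    by move=> p /mapP [v vs ->]; exact: sS.
  by rewrite big_map.
move=> [l [lS ->]]; have [s [c [us sub e]]] := pairs_reduce l.
exists s, c; split; last by rewrite e.
by move=> v /sub /mapP [p pl ->]; exact: lS.
Qed.

Lemma span_subspace (S : set X) : lin_subspace (lin_span S).
Proof.
split.
  by exists [::], (fun _ => 0); split => //; rewrite big_nil.
move=> a x y hx hy. have [lx [lxS ->]] := proj1 (span_pairs S x) hx. have [ly [lyS ->]] := proj1 (span_pairs S y) hy.
apply/span_pairs; exists ([seq (a * p.1, p.2) | p <- lx] ++ ly); split.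
  move=> p; rewrite mem_cat => /orP[/mapP [q ql ->]|pl].
    exact: (lxS q ql).
  exact: (lyS p pl).
rewrite big_cat big_map /= scaler_sumr; congr (_ + _).
by apply: eq_bigr => p _; rewrite scalerA.
Qed.

End Aux.

Lemma main_claim (K : numFieldType) (X : topologicalLmodType K) (Y : set X)
  (A : Type) : dense_lineable_claim Y A.
Proof.
move=> HY [B [[Bop Bbase] /card_leP [h]]]
  [C [Cind [_ /card_esym /card_eqP [f]]]].
have [Y0 Ylin] := HY.
have YD x y : Y x -> Y y -> Y (x + y).
  by move=> Yx Yy; have := Ylin 1 x y Yx Yy; rewrite scale1r.
have YZ r x : Y x -> Y (r *: x).
  by move=> Yx; have := Ylin r x 0 Yx Y0; rewrite addr0.
pose g (a : A) : X := val (f (SigSub (mem_set (I : [set: A] a)))).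
have ginj : injective g.
  move=> a1 a2 /val_inj /('inj_f) e.
  have := e (mem_set I) (mem_set I).
  by move=> /(congr1 val).
have gC a : C (g a) by rewrite /g; exact: set_mem (valP _).
pose k (a : A) : set X := fun x => forall V (bv : V \in B), V !=set0 ->
   val (h (SigSub bv)) = a -> V x.
have kP a : open (k a) /\ k a !=set0.
  case: (pselect (exists V (bv : V \in B), V !=set0 /\ val (h (SigSub bv)) = a)).
    move=> [V [bv [Vn hV]]].
    have -> : k a = V.
      apply/seteqP; split => x.
        by move=> kx; exact: kx V bv Vn hV.
      move=> Vx V' bv' _ hV'.
      have e : h (SigSub bv') = h (SigSub bv).
        by apply: val_inj; rewrite hV hV'.
      have : SigSub bv' = SigSub bv :> set_type B.
        by apply: ('inj_h) e; rewrite in_setT.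
      by move=> /(congr1 val) /= ->.
    by split => //; exact: Bop (set_mem bv).
  move=> nex.
  have -> : k a = setT.
    apply/seteqP; split => // x _ V bv Vn hV.
    by exfalso; apply: nex; exists V, bv.
  by split; [exact: openT | exists 0].
pose Inv (t : set A * (A -> X)) : Prop :=
  [/\ (forall a, ~ t.1 a -> t.2 a = g a), (forall a, t.1 a -> k a (t.2 a)),
      injective t.2 & lin_indep_mod Y (range t.2)].
have Inv0 : Inv (set0, g).
  split => //= s c us sR; apply: Cind => // v /sR [a _ <-]; exact: gC.
pose T := {t | Inv t}.
pose R : rel T := fun s t => `[< (sval s).1 `<=` (sval t).1 /\ forall a, (sval s).1 a -> (sval s).2 a = (sval t).2 a >].
pose t0 : T := exist _ (set0, g) Inv0.
have Rt0 t : R t0 t by apply/asboolP; split => //= a.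
have [tm premax] : exists t, premaximal R t.
  apply: (ZL_preorder t0).
  - by move=> t; apply/asboolP; split.
  - move=> r s t /asboolP [rs1 rs2] /asboolP [st1 st2]; apply/asboolP; split.
      by move=> a /rs1 /st1.
    by move=> a ra; rewrite rs2 // st2 //; exact: rs1.
  move=> Ch Htot.
  pose Du a := exists i, Ch i /\ (sval i).1 a.
  pose Fu a := match pselect (Du a) with
    | left e => (sval (proj1_sig (cid e))).2 a | right _ => g a end.
  have agree i : Ch i -> forall a, (sval i).1 a -> Fu a = (sval i).2 a.
    move=> Chi a Dia; rewrite /Fu; case: pselect => [e|ne]; last first.
      by exfalso; apply: ne; exists i.
    case: (cid e) => j [Chj Dja] /=.
    case: (Htot i j Chi Chj) => /asboolP [_ eq]; first by rewrite eq.
    by rewrite eq.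
  pose Ok t := Ch t \/ t = t0.
  have Tot s t : Ok s -> Ok t -> R s t \/ R t s.
    move=> [Chs|->] [Cht|->]; [exact: Htot | right; exact: Rt0 | left; exact: Rt0 | left; exact: Rt0].
  have Dsub t : Ok t -> (sval t).1 `<=` Du.
    by move=> [Cht|->] a //= Da; exists t.
  have good t b : Ok t -> (Du b -> (sval t).1 b) -> Fu b = (sval t).2 b.
    move=> okt Hb; case: (pselect (Du b)) => Dub.
      case: okt => [Cht|tt0]; first by apply: agree => //; exact: Hb.
      by move: (Hb Dub); rewrite tt0.
    have nDt : ~ (sval t).1 b by move=> /(Dsub t okt).
    case: (svalP t) => Hg _ _ _; rewrite Hg //.
    by rewrite /Fu; case: pselect.
  have fin (bs : seq A) : exists t, Ok t /\ forall b, List.In b bs -> Du b -> (sval t).1 b.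
    elim: bs => [|b bs [t [okt Ht]]]; first by exists t0; split => //; right.
    case: (pselect (Du b)) => [[i [Chi Dib]]|nDb]; last first.
      by exists t; split => // b' [<-|/Ht] //.
    have oki : Ok i by left.
    case: (Tot t i okt oki) => /asboolP [sub _].
      by exists i; split => // b' [<-|/Ht H] // /H; exact: sub.
    by exists t; split => // b' [<- _|/Ht] //; exact: sub.
  have rlist (s : seq X) : (forall v, v \in s -> range Fu v) ->
      exists bs : seq A, forall v, v \in s -> exists b, List.In b bs /\ v = Fu b.
    elim: s => [|w s IH] H; first by exists [::].
    have [bs Hbs] : exists bs : seq A, forall v, v \in s -> exists b, List.In b bs /\ v = Fu b.
      by apply: IH => v vs; apply: H; rewrite inE vs orbT.
    have [b _ <-] := H w (mem_head _ _).
    exists (b :: bs) => v; rewrite inE => /orP[/eqP ->|/Hbs [b' [b'bs ->]]].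
      by exists b; split => //; left.
    by exists b'; split => //; right.
  have Invu : Inv (Du, Fu).
    split => /=.
    - by move=> a nDa; rewrite /Fu; case: pselect.
    - move=> a [i [Chi Dia]]; rewrite (agree i Chi a Dia).
      by case: (svalP i) => _ Hk _ _; exact: Hk.
    - move=> b1 b2 e.
      have [t [okt Ht]] := fin [:: b1; b2].
      case: (svalP t) => _ _ Hinj _; apply: Hinj.
      rewrite -(good t b1 okt) -?(good t b2 okt) //.
        by apply: Ht; right; left.
      by apply: Ht; left.
    - move=> s c us sR sY.
      have [bs Hbs] := rlist s sR.
      have [t [okt Ht]] := fin bs.
      case: (svalP t) => _ _ _ Hind; apply: Hind => // v /Hbs [b [bbs ->]].
      by exists b => //; rewrite (good t b okt) //; exact: Ht.
  exists (exist _ (Du, Fu) Invu) => i Chi; apply/asboolP; split => /=.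
    by move=> a Dia; exists i.
  by move=> a Dia; rewrite (agree i Chi a Dia).
move: tm premax => [[D F] HI] premax.
have [Hg Hk Hinj Hind] := HI; simpl in Hg, Hk, Hinj, Hind.
have hD : forall a, D a.
  move=> a; case: (pselect (D a)) => // nDa; exfalso.
  pose W w := exists l : seq (K * X), (forall p, p \in l -> range F p.2 /\ p.2 != F a)
     /\ Y (w - \sum_(p <- l) p.1 *: p.2).
  have W0 : W 0 by exists [::]; split => //; rewrite big_nil subr0.
  have Wlin r u w : W u -> W w -> W (r *: u + w).
    move=> [lu [luP Yu]] [lw [lwP Yw]].
    exists ([seq (r * p.1, p.2) | p <- lu] ++ lw); split.
      move=> p; rewrite mem_cat => /orP[/mapP [q ql ->]|pl].
        exact: (luP q ql).
      exact: (lwP p pl).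
    rewrite big_cat big_map /=.
    have -> : \sum_(i <- lu) (r * i.1) *: i.2 = r *: \sum_(i <- lu) i.1 *: i.2.
      by rewrite scaler_sumr; apply: eq_bigr => p _; rewrite scalerA.
    rewrite opprD addrACA -scalerBr.
    exact: Ylin.
  have Wg b : b <> a -> W (F b).
    move=> ba; exists [:: (1, F b)]; split.
      move=> p; rewrite inE => /eqP -> /=; split; first by exists b.
      by apply/eqP => /Hinj.
    by rewrite big_seq1 scale1r subrr.
  have notW : ~ W (F a).
    move=> [l [lP Yl]].
    have [s [c [us sub e]]] := pairs_reduce _ _ l.
    have Fas : F a \notin s.
      apply/negP => /sub /mapP [p pl pe].
      by have [_] := lP p pl; rewrite -pe eqxx.
    have := Hind (F a :: s) (fun v => if v == F a then 1 else - c v).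
    move=> /(_ _ _ _ (F a) (mem_head _ _)); rewrite eqxx => H.
    have : (1 : K) = 0.
      apply: H.
      - by rewrite /= Fas us.
      - move=> v; rewrite inE => /orP[/eqP ->|]; first by exists a.
        move=> /sub /mapP [p pl ->]; exact: (lP p pl).1.
      rewrite big_cons eqxx scale1r.
      rewrite (@eq_big_seq _ _ _ _ _ _ (fun v => - (c v *: v))); last first.
        move=> v vs; have -> : (v == F a) = false.
          by apply/eqP => va; move: Fas; rewrite -va vs.
        by rewrite scaleNr.
      by rewrite sumrN e.
    by move/eqP; rewrite oner_eq0.
  have [kop [p kp]] := kP a.
  have [t [tn0 kt]] := perturb _ _ p (F a) _ kop kp.
  have [z [kz nWz]] : exists z, k a z /\ ~ W z.
    case: (pselect (W p)) => Wp; last by exists p.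
    exists (p + t *: F a); split => // Wz; apply: notW.
    have := Wlin t^-1 _ _ (Wlin (-1) _ _ Wp Wz) W0.
    by rewrite scaleN1r addKr scalerA mulVf // scale1r addr0.
  pose F' b := if pselect (b = a) is left _ then z else F b.
  have F'a : F' a = z by rewrite /F'; case: pselect.
  have F'b b : b <> a -> F' b = F b by rewrite /F'; case: pselect.
  have FbW b : b <> a -> W (F b) by exact: Wg.
  have Inv' : Inv (D `|` [set a], F').
    split => /=.
    - move=> b nb; have ba : b <> a by move=> ba; apply: nb; right.
      by rewrite F'b //; apply: Hg => Db; apply: nb; left.
    - move=> b [Db|->]; last by rewrite F'a.
      have ba : b <> a by move=> ba; apply: nDa; rewrite -ba.
      by rewrite F'b //; exact: Hk.
    - move=> b1 b2.
      case: (pselect (b1 = a)) => [->|b1a]; case: (pselect (b2 = a)) => [->|b2a] //.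
      + by rewrite F'a F'b // => zb; exfalso; apply: nWz; rewrite zb; exact: Wg.
      + by rewrite F'a F'b // => zb; exfalso; apply: nWz; rewrite -zb; exact: Wg.
      + by rewrite !F'b //; exact: Hinj.
    - move=> s c us sR sY v vs.
      have oth w : w \in s -> w != z -> range F w /\ w != F a.
        move=> ws wz; have [b _ bw] := sR w ws.
        case: (pselect (b = a)) => ba; first by move: wz; rewrite -bw ba F'a eqxx.
        rewrite -bw F'b //; split; first by exists b.
        by apply/eqP => /Hinj.
      case: (boolP (z \in s)) => zs; last first.
        apply: Hind us _ sY v vs => w ws.
        have wz : w != z by apply/eqP => wz; move: zs; rewrite -wz ws.
        exact: (oth w ws wz).1.
      have remP w : w \in rem z s -> w \in s /\ w != z.
        by rewrite mem_rem_uniq // inE => /andP[wz ws].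
      have cz0 : c z = 0.
        have [//|czn] := eqVneq (c z) 0.
        exfalso; apply: nWz.
        exists [seq (- (c w / c z), w) | w <- rem z s]; split.
          move=> q /mapP [w /remP [ws wz] ->] /=; exact: oth.
        move: sY => /(YZ (c z)^-1); congr Y.
        rewrite (big_rem z zs) /= big_map scalerDr scalerA mulVf // scale1r.
        rewrite scaler_sumr -sumrN; congr (_ + _); apply: eq_bigr => w _.
        by rewrite /= scaleNr opprK scalerA mulrC.
      have Yrem : Y (\sum_(w <- rem z s) c w *: w).
        by move: sY; rewrite (big_rem z zs) /= cz0 scale0r add0r.
      have Hr := Hind (rem z s) c (rem_uniq z us) _ Yrem.
      have [/eqP ->//|vz] := boolP (v == z).
      apply: Hr; first by move=> w /remP [ws wz]; exact: (oth w ws wz).1.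
      by rewrite mem_rem_uniq // inE vz vs.
  have := premax (exist _ (D `|` [set a], F') Inv').
  have Rt : R (exist _ (D, F) HI) (exist _ (D `|` [set a], F') Inv').
    apply/asboolP; split => /=; first by move=> b Db; left.
    move=> b Db; rewrite F'b //; by move=> ba; apply: nDa; rewrite -ba.
  move=> /(_ Rt) /asboolP [/= sub _].
  by apply: nDa; apply: sub; right.
exists (lin_span (range F)); split; first exact: span_subspace.
split.
  move=> O [x Ox] oO.
  have [V [BV [Vx VO]]] := Bbase O oO x Ox.
  have bv : V \in B by exact: mem_set.
  pose a := val (h (SigSub bv)).
  have kFa := Hk a (hD a).
  have VFa : V (F a) := kFa V bv (ex_intro _ x Vx) erefl.
  exists (F a); split; first exact: VO.
  exists [:: F a], (fun _ => 1); split; last by rewrite big_seq1 scale1r.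
  by move=> v; rewrite inE => /eqP ->; exists a.
split.
  exists (range F); split => //.
    move=> s c us sR s0; apply: Hind => //.
    by rewrite s0.
  split => //; exact: (@inj_card_eq _ _ setT F (fun x y _ _ => Hinj x y)).
move=> x [s [c [sR ->]]].
case: (pselect (Y (\sum_(v <- s) c v *: v))) => Yx; last by left.
right.
have [s' [c' [us' sub e]]] := uniq_reduce _ _ s c.
rewrite -e in Yx *.
apply: big1_seq => v vs'.
by rewrite (Hind s' c' us' (fun v h => sR v (sub v h)) Yx v vs') scale0r.
Qed.

Local Open Scope complex_scope.

Theorem lemma2p1 :
  (forall (R : realType) (X : topologicalLmodType R) (Y : set X) (A : Type),
      dense_lineable_claim Y A) /\
  (forall (R : realType) (X : topologicalLmodType R[i]) (Y : set X) (A : Type),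
      dense_lineable_claim Y A).
Proof.
split => R X Y A; exact: main_claim.
Qed.
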